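(* Let $\gamma\ge0$ be an integer and let $\xi=\{\xi^m\}$ with $\xi^m=K_\gamma\mathbf{1}(m=\gamma)$, $K_\gamma=\pm2\omega_\gamma\sqrt{\frac{2}{3C_{\gamma\gamma\gamma\gamma}}}$. Then the non-degeneracy condition $\ker(d\mathcal{M}(\xi))=\{0\}$ (for $d\mathcal{M}(\xi)$ acting on $l^2_{s+3}$) is equivalent to: $\omega_m^2C_{\gamma\gamma\gamma\gamma}-2\omega_\gamma^2C_{\gamma\gamma mm}\ne0$ for all $m\ge2\gamma+1$, and $D_{\gamma n}\ne0$ for all $n\in\{0,1,\dots,\gamma-1\}$, where $$D_{\gamma n}=\left[\omega_n^2C_{\gamma\gamma\gamma\gamma}-2\omega_\gamma^2C_{\gamma\gamma nn}\right]\left[\omega_{2\gamma-n}^2C_{\gamma\gamma\gamma\gamma}-2\omega_\gamma^2C_{\gamma,\gamma,2\gamma-n,2\gamma-n}\right]-\left[\omega_\gamma^2C_{\gamma,2\gamma-n,\gamma,n}\right]^2.$$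
   Context: $\omega_n=n+1$, $C_{ijkm}=\frac2\pi\int_{-1}^1U_iU_jU_kU_m\sqrt{1-y^2}\,dy$ ($U_n$ Chebyshev polynomials of the second kind). $l^2_s$: sequences with $\sum_jj^{2s}|u^j|^2<\infty$. $(A\xi)^m=\omega_m^2\xi^m$; $(f(u))^m=-\sum_{i,j,k\ge0}C_{ijkm}u^iu^ju^k$; $\Phi^t(\xi)=\{\xi^n\cos(\omega_nt)\}_n$; $\mathcal{M}(\xi)=A\xi+\frac1{2\pi}\int_0^{2\pi}\Phi^t[f(\Phi^t(\xi))]dt$. *)

(* Defs.v *)
From Stdlib Require Import Reals Lra.
From Coquelicot Require Import Coquelicot.
Open Scope R_scope.

Definition omega (n : nat) : R := INR n + 1.

Fixpoint U (n : nat) (y : R) : R :=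
  match n with
  | O => 1
  | S n' => match n' with
            | O => 2 * y
            | S n'' => 2 * y * U n' y - U n'' y
            end
  end.

Definition Ccoef (i j k m : nat) : R :=
  2 / PI * RInt (fun y => U i y * U j y * U k y * U m y * sqrt (1 - y ^ 2)) (-1) 1.

Definition seqR := nat -> R.

Definition l2s (s : R) (u : seqR) : Prop :=
  ex_series (fun j => Rpower (INR j) (2 * s) * (u j) ^ 2).

Definition fmap (u : seqR) (m : nat) : R :=
  - Series (fun i => Series (fun j => Series (fun k =>
        Ccoef i j k m * u i * u j * u k))).

Definition Phi (t : R) (v : seqR) : seqR := fun n => v n * cos (omega n * t).

Definition Mmap (v : seqR) (m : nat) : R :=
  (omega m) ^ 2 * v m
  + / (2 * PI) * RInt (fun t => Phi t (fmap (Phi t v)) m) 0 (2 * PI).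

Definition dM (xi eta : seqR) (m : nat) : R :=
  Derive (fun e => Mmap (fun n => xi n + e * eta n) m) 0.

Definition Dgn (g n : nat) : R :=
  ((omega n) ^ 2 * Ccoef g g g g - 2 * (omega g) ^ 2 * Ccoef g g n n)
  * ((omega (2 * g - n)) ^ 2 * Ccoef g g g g
     - 2 * (omega g) ^ 2 * Ccoef g g (2 * g - n) (2 * g - n))
  - ((omega g) ^ 2 * Ccoef g (2 * g - n) g n) ^ 2.

(* Main.v *)
Require Import Defs.
From Stdlib Require Import Reals Lra Lia ZArith.
From Coquelicot Require Import Coquelicot.
Open Scope R_scope.

Lemma U_SS n y : U (S (S n)) y = 2*y*U (S n) y - U n y.
Proof. reflexivity. Qed.

Lemma two_step (P : nat -> Prop) : P O -> P 1%nat -> (forall n, P n -> P (S n) -> P (S (S n))) -> forall n, P n.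
Proof.
  intros H0 H1 HS n. assert (P n /\ P (S n)); [|tauto].
  induction n; [tauto|]. destruct IHn; split; auto.
Qed.

Lemma U_sin n t : sin t * U n (cos t) = sin (INR (S n) * t).
Proof.
  induction n using two_step.
  - simpl. rewrite Rmult_1_l, Rmult_1_r. reflexivity.
  - simpl U. replace (INR 2 * t) with (2 * t) by (simpl; ring). rewrite sin_2a. ring.
  - rewrite U_SS.
    replace (sin t * (2 * cos t * U (S n) (cos t) - U n (cos t))) with
      (2 * cos t * (sin t * U (S n) (cos t)) - sin t * U n (cos t)) by ring.
    rewrite IHn, IHn0.
    replace (INR (S (S (S n))) * t) with (INR (S (S n)) * t + t) by (rewrite (S_INR (S (S n))); ring).
    replace (INR (S n) * t) with (INR (S (S n)) * t - t) by (rewrite (S_INR (S n)); ring).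
    rewrite sin_plus, sin_minus. ring.
Qed.

Lemma U_one n : U n 1 = INR n + 1.
Proof.
  induction n using two_step.
  - simpl; ring.
  - simpl; ring.
  - rewrite U_SS, IHn, IHn0. rewrite !S_INR. ring.
Qed.

Lemma U_mone n : U n (-1) = (-1)^n * (INR n + 1).
Proof.
  induction n using two_step.
  - simpl; ring.
  - simpl; ring.
  - rewrite U_SS, IHn, IHn0. rewrite !S_INR. simpl. ring.
Qed.

Lemma sin_mult_bound n t : Rabs (sin (INR (S n) * t)) <= INR (S n) * Rabs (sin t).
Proof.
  induction n.
  - simpl. rewrite !Rmult_1_l. lra.
  - replace (INR (S (S n)) * t) with (INR (S n) * t + t) by (rewrite (S_INR (S n)); ring).
    rewrite sin_plus. rewrite (S_INR (S n)).
    eapply Rle_trans. apply Rabs_triang.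
    rewrite !Rabs_mult.
    assert (Rabs (cos t) <= 1) by (apply Rabs_le; apply COS_bound).
    assert (Rabs (cos (INR (S n) * t)) <= 1) by (apply Rabs_le; apply COS_bound).
    pose proof (Rabs_pos (sin t)). pose proof (Rabs_pos (sin (INR (S n) * t))).
    nra.
Qed.

Lemma U_bound n y : -1 <= y <= 1 -> Rabs (U n y) <= INR n + 1.
Proof.
  intros Hy.
  destruct (Req_dec y 1) as [->|H1]. { rewrite U_one. rewrite Rabs_right; [lra|]. pose proof (pos_INR n); lra. }
  destruct (Req_dec y (-1)) as [->|H2]. { rewrite U_mone. rewrite Rabs_mult, pow_1_abs, Rmult_1_l. rewrite Rabs_right; [lra|]. pose proof (pos_INR n); lra. }
  set (t := acos y).
  assert (Hc : cos t = y) by (apply cos_acos; lra).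
  assert (Hs : sin t <> 0).
  { intro Hs0. pose proof (sin2_cos2 t). rewrite Hs0, Hc in H. unfold Rsqr in H.
    assert (y * y = 1) by lra. assert ((y - 1) * (y + 1) = 0) by nra.
    apply Rmult_integral in H3. destruct H3; lra. }
  rewrite <- Hc. pose proof (U_sin n t). pose proof (sin_mult_bound n t).
  assert (Rabs (sin t) * Rabs (U n (cos t)) <= Rabs (sin t) * (INR n + 1)).
  { rewrite <- Rabs_mult, H. eapply Rle_trans; [apply H0|]. rewrite S_INR. right; ring. }
  pose proof (Rabs_pos_lt _ Hs).
  apply Rmult_le_reg_l with (Rabs (sin t)); assumption.
Qed.

Lemma cR_mult (f g : R -> R) x : continuous f x -> continuous g x -> continuous (fun y => f y * g y) x.
Proof. intros; apply (continuous_mult (K:=R_AbsRing)); auto. Qed.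
Lemma cR_minus (f g : R -> R) x : continuous f x -> continuous g x -> continuous (fun y => f y - g y) x.
Proof. intros; apply (continuous_minus (V:=R_NormedModule)); auto. Qed.
Lemma cR_plus (f g : R -> R) x : continuous f x -> continuous g x -> continuous (fun y => f y + g y) x.
Proof. intros; apply (continuous_plus (V:=R_NormedModule)); auto. Qed.
Lemma cR_const (c : R) x : continuous (fun _ : R => c) x.
Proof. apply continuous_const. Qed.
Lemma cR_id x : continuous (fun y : R => y) x.
Proof. apply continuous_id. Qed.

Lemma U_cont n y : continuous (U n) y.
Proof.
  induction n using two_step.
  - simpl. apply cR_const.
  - apply (continuous_ext (fun y => 2 * y)); [intros; reflexivity|]. apply cR_mult; [apply cR_const|apply cR_id].
  - apply (continuous_ext (fun y => 2 * y * U (S n) y - U n y)).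
    { intros x. rewrite U_SS. reflexivity. }
    apply cR_minus; auto. apply cR_mult; auto.
    apply cR_mult. apply cR_const. apply cR_id.
Qed.

Notation RI := (@RInt R_CompleteNormedModule).

Lemma RInt_plusR (f g : R -> R) a b : ex_RInt f a b -> ex_RInt g a b ->
  @eq R (RI (fun x => f x + g x) a b) (RI f a b + RI g a b).
Proof. intros; apply (RInt_plus f g); auto. Qed.

Lemma RInt_scalR c (f : R -> R) a b : ex_RInt f a b ->
  @eq R (RI (fun x => c * f x) a b) (c * RI f a b).
Proof. intros; apply (RInt_scal f a b c); auto. Qed.

Lemma cont_ex (f : R -> R) a b : (forall x, continuous f x) -> ex_RInt f a b.
Proof. intros; apply (ex_RInt_continuous (V:=R_CompleteNormedModule)); auto. Qed.
Lemma ex_RInt_scalR c (f : R -> R) a b : ex_RInt f a b -> ex_RInt (fun x => c * f x) a b.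
Proof. intros H. apply (ex_RInt_scal (V:=R_NormedModule) f a b c H). Qed.
Lemma ex_RInt_plusR (f g : R -> R) a b : ex_RInt f a b -> ex_RInt g a b -> ex_RInt (fun x => f x + g x) a b.
Proof. intros H1 H2. apply (ex_RInt_plus (V:=R_NormedModule) f g a b H1 H2). Qed.
Lemma ex_RInt_minusR (f g : R -> R) a b : ex_RInt f a b -> ex_RInt g a b -> ex_RInt (fun x => f x - g x) a b.
Proof. intros H1 H2. apply (ex_RInt_minus (V:=R_NormedModule) f g a b H1 H2). Qed.
Lemma ex_RInt_extR (f g : R -> R) a b : (forall x, Rmin a b < x < Rmax a b -> f x = g x) -> ex_RInt f a b -> ex_RInt g a b.
Proof. intros H1 H2. apply (ex_RInt_ext (V:=R_NormedModule) f g a b H1 H2). Qed.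

Lemma sin_INR_PI k : sin (INR k * PI) = 0.
Proof. apply sin_eq_0_1. exists (Z.of_nat k). rewrite INR_IZR_INZ. reflexivity. Qed.

Lemma RInt_cos_k (k:nat) : (1 <= k)%nat -> @eq R (RI (fun t => cos (INR k * t)) 0 PI) 0.
Proof.
  intros Hk. assert (Hk' : INR k <> 0) by (apply not_0_INR; lia).
  assert (H : is_RInt (fun t => cos (INR k * t)) 0 PI (minus ((fun t => sin (INR k * t) / INR k) PI) ((fun t => sin (INR k * t) / INR k) 0))).
  { apply (is_RInt_derive (V:=R_CompleteNormedModule) (fun t => sin (INR k * t) / INR k)).
    - intros x _. auto_derive; auto. field; auto.
    - intros x _. apply continuous_cos_comp. apply cR_mult; [apply cR_const|apply cR_id]. }
  apply (is_RInt_unique (V:=R_CompleteNormedModule)) in H. rewrite H. simpl. rewrite sin_INR_PI. rewrite Rmult_0_r, sin_0.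
  unfold minus, plus, opp; simpl. field; auto.
Qed.

Lemma RInt_extR (f g : R -> R) a b : (forall x, Rmin a b < x < Rmax a b -> f x = g x) -> @eq R (RI f a b) (RI g a b).
Proof. intros; apply (RInt_ext (V:=R_CompleteNormedModule)); auto. Qed.

Lemma RInt_minusR (f g : R -> R) a b : ex_RInt f a b -> ex_RInt g a b ->
  @eq R (RI (fun x => f x - g x) a b) (RI f a b - RI g a b).
Proof.
  intros Hf Hg.
  assert (Hg' : ex_RInt (fun x => -1 * g x) a b).
  { apply ex_RInt_scalR; exact Hg. }
  rewrite (RInt_extR _ (fun x => f x + (-1) * g x)) by (intros; ring).
  rewrite (RInt_plusR _ _ _ _ Hf Hg'). rewrite (RInt_scalR _ _ _ _ Hg). ring.
Qed.

Inductive Deg : nat -> (R -> R) -> Prop :=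
| Dconst c : Deg 0 (fun _ => c)
| Dx d f : Deg d f -> Deg (S d) (fun y => y * f y)
| Dplus d f g : Deg d f -> Deg d g -> Deg d (fun y => f y + g y)
| Dscal d c f : Deg d f -> Deg d (fun y => c * f y)
| Dle d d' f : (d <= d')%nat -> Deg d f -> Deg d' f
| Dext d f g : (forall y, f y = g y) -> Deg d f -> Deg d g.

Lemma Deg_cont d f : Deg d f -> forall x, continuous f x.
Proof.
  induction 1; intros x.
  - apply cR_const.
  - apply cR_mult; [apply cR_id | apply IHDeg].
  - apply cR_plus; [apply IHDeg1 | apply IHDeg2].
  - apply cR_mult; [apply cR_const | apply IHDeg].
  - apply IHDeg.
  - apply (continuous_ext f); [exact H | apply IHDeg].
Qed.

Lemma Deg_mult a f b g : Deg a f -> Deg b g -> Deg (a + b) (fun y => f y * g y).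
Proof.
  intros Hf Hg. induction Hf.
  - simpl. apply Dscal; auto.
  - simpl. apply (Dext _ (fun y => y * (f y * g y))). intros; ring. apply Dx; auto.
  - apply (Dext _ (fun y => f y * g y + g0 y * g y)). intros; ring. apply Dplus; auto.
  - apply (Dext _ (fun y => c * (f y * g y))). intros; ring. apply Dscal; auto.
  - apply (Dle (d + b)); auto. lia.
  - apply (Dext _ (fun y => f y * g y)). intros; rewrite H; auto. auto.
Qed.

Lemma Deg_U n : Deg n (U n).
Proof.
  induction n using two_step.
  - apply (Dext _ (fun _ => 1)); [intros; reflexivity | apply Dconst].
  - apply (Dext _ (fun y => y * 2)). intros; simpl; ring. apply Dx, Dconst.
  - apply (Dext _ (fun y => y * (2 * U (S n) y) + (-1) * U n y)).
    { intros; rewrite U_SS; ring. }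
    apply Dplus. apply Dx, Dscal; auto. apply Dscal. apply (Dle n); auto.
Qed.

Definition Iorth (N : nat) (f : R -> R) : R :=
  RI (fun t => sin (INR (S N) * t) * sin t * f (cos t)) 0 PI.

Lemma Iorth_ex N f : (forall x, continuous f x) -> ex_RInt (fun t => sin (INR (S N) * t) * sin t * f (cos t)) 0 PI.
Proof.
  intros Hf. apply cont_ex. intros x. apply cR_mult. apply cR_mult.
  apply continuous_sin_comp. apply cR_mult; [apply cR_const|apply cR_id].
  apply continuous_sin. apply (continuous_comp cos f). apply continuous_cos. apply Hf.
Qed.

Lemma Iorth_const N c : (1 <= N)%nat -> Iorth N (fun _ => c) = 0.
Proof.
  intros HN. unfold Iorth.
  rewrite (RInt_extR _ (fun t => (c/2) * (cos (INR N * t) - cos (INR (S (S N)) * t)))).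
  2:{ intros t _.
      replace (INR N * t) with (INR (S N) * t - t) by (rewrite (S_INR N); ring).
      replace (INR (S (S N)) * t) with (INR (S N) * t + t) by (rewrite (S_INR (S N)); ring).
      rewrite cos_minus, cos_plus. field. }
  assert (E1 : forall k, ex_RInt (fun t => cos (INR k * t)) 0 PI).
  { intros k. apply cont_ex. intros x. apply continuous_cos_comp. apply cR_mult; [apply cR_const|apply cR_id]. }
  rewrite RInt_scalR. rewrite RInt_minusR by apply E1.
  rewrite !RInt_cos_k; try lia. ring.
  apply ex_RInt_minusR; apply E1.
Qed.

Lemma Iorth_ortho d f : Deg d f -> forall N, (d < N)%nat -> Iorth N f = 0.
Proof.
  induction 1; intros N HN.
  - apply Iorth_const. lia.
  - destruct N as [|N']; [lia|].
    assert (Hc : forall x, continuous f x) by (apply Deg_cont with d; auto).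
    unfold Iorth.
    rewrite (RInt_extR _ (fun t => (1/2) * (sin (INR (S (S (S N'))) * t) * sin t * f (cos t)
                                 + sin (INR (S N') * t) * sin t * f (cos t)))).
    2:{ intros t _.
      assert (E1 : INR (S (S (S N'))) * t = INR (S (S N')) * t + t) by (rewrite (S_INR (S (S N'))); ring).
      assert (E2 : INR (S N') * t = INR (S (S N')) * t - t) by (rewrite (S_INR (S N')); ring).
      rewrite E1, E2, sin_plus, sin_minus. field. }
    rewrite RInt_scalR. rewrite RInt_plusR; try apply Iorth_ex; auto.
    fold (Iorth (S (S N')) f). fold (Iorth N' f). rewrite !IHDeg; try lia. ring.
    apply ex_RInt_plusR; apply Iorth_ex; auto.
  - assert (Hc : forall x, continuous f x) by (apply Deg_cont with d; auto).
    assert (Hc' : forall x, continuous g x) by (apply Deg_cont with d; auto).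
    unfold Iorth. rewrite (RInt_extR _ (fun t => sin (INR (S N) * t) * sin t * f (cos t) + sin (INR (S N) * t) * sin t * g (cos t))).
    2:{ intros; ring. }
    rewrite RInt_plusR; try apply Iorth_ex; auto.
    fold (Iorth N f). fold (Iorth N g). rewrite IHDeg1, IHDeg2; auto. ring.
  - assert (Hc : forall x, continuous f x) by (apply Deg_cont with d; auto).
    unfold Iorth. rewrite (RInt_extR _ (fun t => c * (sin (INR (S N) * t) * sin t * f (cos t)))).
    2:{ intros; ring. }
    rewrite RInt_scalR; try apply Iorth_ex; auto.
    fold (Iorth N f). rewrite IHDeg; auto. ring.
  - apply IHDeg. lia.
  - unfold Iorth. rewrite (RInt_extR _ (fun t => sin (INR (S N) * t) * sin t * f (cos t))).
    fold (Iorth N f). apply IHDeg; auto. intros; rewrite H; auto.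
Qed.

Lemma cR_opp (f : R -> R) x : continuous f x -> continuous (fun y => - f y) x.
Proof. intros; apply (continuous_opp (V:=R_NormedModule)); auto. Qed.

Lemma cR_sqrt1 x : continuous (fun y => sqrt (1 - y ^ 2)) x.
Proof.
  apply continuous_sqrt_comp. apply cR_minus. apply cR_const.
  apply (continuous_ext (fun y => y * (y * 1))). intros; simpl; ring.
  apply cR_mult. apply cR_id. apply cR_mult. apply cR_id. apply cR_const.
Qed.

Lemma Cint_cont i j k m x : continuous (fun y => U i y * U j y * U k y * U m y * sqrt (1 - y ^ 2)) x.
Proof.
  repeat apply cR_mult; try apply U_cont. apply cR_sqrt1.
Qed.

Lemma Cint_ex i j k m a b : ex_RInt (fun y => U i y * U j y * U k y * U m y * sqrt (1 - y ^ 2)) a b.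
Proof. apply cont_ex. intros; apply Cint_cont. Qed.

Lemma cov (F : R -> R) : (forall x, continuous F x) ->
  @eq R (RI F (-1) 1) (RI (fun t => sin t * F (cos t)) 0 PI).
Proof.
  intros HF.
  assert (H := RInt_comp (V:=R_CompleteNormedModule) F cos (fun t => - sin t) PI 0).
  rewrite cos_PI, cos_0 in H. rewrite <- H.
  2:{ intros; apply HF. }
  2:{ intros x _. split. apply is_derive_cos. apply cR_opp. apply continuous_sin. }
  assert (Hex : ex_RInt (fun t => sin t * F (cos t)) 0 PI).
  { apply cont_ex. intros x. apply cR_mult. apply continuous_sin.
    apply (continuous_comp cos F). apply continuous_cos. apply HF. }
  rewrite (RInt_extR _ (fun t => (-1) * (sin t * F (cos t)))).
  2:{ intros; unfold scal; simpl; unfold mult; simpl; ring. }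
  rewrite RInt_scalR.
  2:{ apply (ex_RInt_swap (V:=R_NormedModule)). exact Hex. }
  rewrite <- (opp_RInt_swap (V:=R_CompleteNormedModule)) by exact Hex.
  unfold opp; simpl. ring.
Qed.

Lemma C_sel n a b c : (a + b + c < n)%nat -> Ccoef n a b c = 0.
Proof.
  intros Hn. unfold Ccoef.
  assert (Hq : Deg (a + b + c) (fun y => U a y * U b y * U c y)).
  { apply Deg_mult. apply Deg_mult; apply Deg_U. apply Deg_U. }
  assert (HI := Iorth_ortho _ _ Hq n Hn). unfold Iorth in HI.
  change (RInt (fun y => U n y * U a y * U b y * U c y * sqrt (1 - y ^ 2)) (-1) 1) with
    (RI (fun y => U n y * U a y * U b y * U c y * sqrt (1 - y ^ 2)) (-1) 1).
  rewrite cov by (intros; apply Cint_cont).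
  rewrite (RInt_extR _ (fun t => sin (INR (S n) * t) * sin t * (U a (cos t) * U b (cos t) * U c (cos t)))).
  - rewrite HI. ring.
  - intros t Ht. rewrite Rmin_left, Rmax_right in Ht by (pose proof PI_RGT_0; lra).
    rewrite <- U_sin.
    assert (Hs : sqrt (1 - cos t ^ 2) = sin t).
    { rewrite <- (sqrt_pow2 (sin t)). f_equal. pose proof (sin2_cos2 t). unfold Rsqr in H. simpl. nra.
      left; apply sin_gt_0; lra. }
    rewrite Hs. ring.
Qed.

Lemma C_12 i j k m : Ccoef i j k m = Ccoef j i k m.
Proof. unfold Ccoef. f_equal. apply RInt_extR. intros; ring. Qed.
Lemma C_23 i j k m : Ccoef i j k m = Ccoef i k j m.
Proof. unfold Ccoef. f_equal. apply RInt_extR. intros; ring. Qed.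
Lemma C_34 i j k m : Ccoef i j k m = Ccoef i j m k.
Proof. unfold Ccoef. f_equal. apply RInt_extR. intros; ring. Qed.

Lemma C_bound i j k m : Rabs (Ccoef i j k m) <= 2 * ((INR i + 1) * (INR j + 1) * (INR k + 1) * (INR m + 1)).
Proof.
  unfold Ccoef. set (P := (INR i + 1) * (INR j + 1) * (INR k + 1) * (INR m + 1)).
  assert (HP : 0 <= P) by (unfold P; pose proof (pos_INR i); pose proof (pos_INR j); pose proof (pos_INR k); pose proof (pos_INR m);
     repeat apply Rmult_le_pos; lra).
  assert (HI : Rabs (RI (fun y => U i y * U j y * U k y * U m y * sqrt (1 - y ^ 2)) (-1) 1) <= (1 - -1) * P).
  { apply abs_RInt_le_const. lra. apply Cint_ex.
    intros t Ht. rewrite !Rabs_mult.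
    assert (Hb : forall n, Rabs (U n t) <= INR n + 1) by (intros; apply U_bound; lra).
    assert (Hsq : Rabs (sqrt (1 - t ^ 2)) <= 1).
    { rewrite Rabs_right by (apply Rle_ge, sqrt_pos). apply Rle_trans with (sqrt 1); [apply sqrt_le_1_alt; simpl; nra | rewrite sqrt_1; lra]. }
    unfold P. rewrite <- (Rmult_1_r ((INR i + 1) * (INR j + 1) * (INR k + 1) * (INR m + 1))).
    repeat apply Rmult_le_compat; try apply Rabs_pos; try apply Rmult_le_pos; try apply Rabs_pos; auto;
    repeat apply Rmult_le_pos; try apply Rabs_pos. }
  pose proof PI2_3_2.
  rewrite Rabs_mult. rewrite (Rabs_right (2/PI)) by (apply Rle_ge; apply Rdiv_le_0_compat; lra).
  apply Rle_trans with (2 / PI * ((1 - -1) * P)).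
  apply Rmult_le_compat_l; [apply Rdiv_le_0_compat; lra| exact HI].
  replace (2 / PI * ((1 - -1) * P)) with ((4 / PI) * P) by (field; lra).
  apply Rmult_le_compat_r; auto. apply Rle_trans with (4/3). 
  apply Rmult_le_compat_l; [lra|]. apply Rinv_le_contravar; lra. lra.
Qed.

Lemma C_pos g : 0 < Ccoef g g g g.
Proof.
  unfold Ccoef.
  set (F := fun y => U g y * U g y * U g y * U g y * sqrt (1 - y ^ 2)).
  change (0 < 2 / PI * RI F (-1) 1).
  assert (Hc : continuity_pt (U g) 1) by (apply continuity_pt_filterlim; apply U_cont).
  destruct (Hc (1/2)) as [alp [Halp Hd]]; [lra|].
  set (d := 1 - Rmin alp 1 / 2).
  assert (Hmin : 0 < Rmin alp 1 <= 1) by (split; [apply Rmin_pos; lra | apply Rmin_r]).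
  assert (Hd1 : 1/2 <= d < 1) by (unfold d; lra).
  assert (Hpos : forall y, d < y < 1 -> 0 < F y).
  { intros y Hy. unfold F.
    assert (HU : 0 < U g y).
    { assert (Hy' : Rabs (U g y - U g 1) < 1/2).
      { apply (Hd y). split. split. exact I. lra. simpl. unfold R_dist.
        rewrite Rabs_left by lra. assert (Rmin alp 1 <= alp) by apply Rmin_l. unfold d in Hy. lra. }
      rewrite U_one in Hy'. apply Rabs_def2 in Hy'. pose proof (pos_INR g). lra. }
    assert (Hs : 0 < sqrt (1 - y ^ 2)) by (apply sqrt_lt_R0; simpl; nra).
    repeat apply Rmult_lt_0_compat; auto. }
  assert (HFc : forall x, continuous F x) by (intros; apply Cint_cont).
  assert (HF0 : forall y, 0 <= F y).
  { intros y. unfold F. replace (U g y * U g y * U g y * U g y * sqrt (1 - y ^ 2)) with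
      ((U g y * U g y) * (U g y * U g y) * sqrt (1 - y ^ 2)) by ring.
    apply Rmult_le_pos; [|apply sqrt_pos]. apply Rmult_le_pos; apply Rle_0_sqr. }
  assert (H1 : 0 <= RI F (-1) d) by (apply RInt_ge_0; [lra | apply cont_ex; auto | intros; auto]).
  assert (H2 : 0 < RI F d 1) by (apply RInt_gt_0; [lra | exact Hpos | intros; auto]).
  assert (HC : RI F (-1) 1 = RI F (-1) d + RI F d 1).
  { symmetry. apply (RInt_Chasles (V:=R_CompleteNormedModule)); apply cont_ex; auto. }
  rewrite HC. pose proof PI_RGT_0. apply Rmult_lt_0_compat. apply Rdiv_lt_0_compat; lra. lra.
Qed.

Definition J (i j k m : nat) : R :=
  RI (fun t => cos (omega i * t) * cos (omega j * t) * cos (omega k * t) * cos (omega m * t)) 0 (2 * PI).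

Lemma RInt_cosZ (r : R) (z : Z) : r = IZR z ->
  @eq R (RI (fun t => cos (r * t)) 0 (2 * PI)) (if Z.eq_dec z 0 then 2 * PI else 0).
Proof.
  intros ->. destruct (Z.eq_dec z 0) as [->|Hz].
  - rewrite (RInt_extR _ (fun _ => 1)) by (intros; rewrite Rmult_0_l, cos_0; reflexivity).
    rewrite (RInt_const (V:=R_CompleteNormedModule)). unfold scal; simpl; unfold mult; simpl. ring.
  - assert (Hk' : IZR z <> 0) by (apply not_0_IZR; auto).
    assert (H : is_RInt (fun t => cos (IZR z * t)) 0 (2 * PI) (minus ((fun t => sin (IZR z * t) / IZR z) (2 * PI)) ((fun t => sin (IZR z * t) / IZR z) 0))).
    { apply (is_RInt_derive (V:=R_CompleteNormedModule) (fun t => sin (IZR z * t) / IZR z)).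
      - intros x _. auto_derive; auto. field; auto.
      - intros x _. apply continuous_cos_comp. apply cR_mult; [apply cR_const|apply cR_id]. }
    apply (is_RInt_unique (V:=R_CompleteNormedModule)) in H. rewrite H. simpl.
    assert (Hs : sin (IZR z * (2 * PI)) = 0).
    { apply sin_eq_0_1. exists (2 * z)%Z. rewrite mult_IZR. simpl. ring. }
    rewrite Hs, Rmult_0_r, sin_0. unfold minus, plus, opp; simpl. field; auto.
Qed.

Lemma pc u v : cos u * cos v = (cos (u + v) + cos (u - v)) / 2.
Proof. rewrite cos_plus, cos_minus. field. Qed.

Lemma prod4 x y z : cos x * cos y * cos y * cos z =
  1/8 * (cos (x + y + y + z) + cos (x + y + y - z) + 2 * cos (x + z) + 2 * cos (x - z)
         + cos (x - y - y + z) + cos (x - y - y - z)).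
Proof.
  rewrite (pc x y).
  replace ((cos (x + y) + cos (x - y)) / 2 * cos y * cos z) with
    ((cos (x + y) * cos y + cos (x - y) * cos y) / 2 * cos z) by field.
  rewrite (pc (x + y) y), (pc (x - y) y).
  replace (x + y - y) with x by ring. replace (x - y + y) with x by ring.
  replace ((((cos (x + y + y) + cos x) / 2 + (cos x + cos (x - y - y)) / 2) / 2) * cos z) with
    ((cos (x + y + y) * cos z + 2 * (cos x * cos z) + cos (x - y - y) * cos z) / 4) by field.
  rewrite (pc (x + y + y) z), (pc x z), (pc (x - y - y) z). field.
Qed.

Lemma cos_ex (r : R) a b : ex_RInt (fun t => cos (r * t)) a b.
Proof. apply cont_ex. intros. apply continuous_cos_comp. apply cR_mult; [apply cR_const|apply cR_id]. Qed.

Ltac exsum := repeat match goal with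
  | |- ex_RInt (fun t => _ + _) _ _ => apply ex_RInt_plusR
  | |- ex_RInt (fun t => _ * _) _ _ => apply ex_RInt_scalR
  | |- ex_RInt (fun t => cos _) _ _ => apply cos_ex
  end.

Definition indb (b : bool) : R := if b then 1 else 0.

Lemma J_val n g m : J n g g m = PI / 4 * (2 * indb (Nat.eqb n m) + indb (Nat.eqb (n + m) (2 * g))
   + indb (Nat.eqb n (m + 2 * g + 2)) + indb (Nat.eqb m (n + 2 * g + 2))).
Proof.
  unfold J. set (b := omega n). set (a := omega g). set (c := omega m).
  rewrite (RInt_extR _ (fun t => 1/8 * (cos ((b + a + a + c) * t) + cos ((b + a + a - c) * t) + 2 * cos ((b + c) * t)
       + 2 * cos ((b - c) * t) + cos ((b - a - a + c) * t) + cos ((b - a - a - c) * t)))).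
  2:{ intros t _. rewrite prod4.
       replace (b * t + a * t + a * t + c * t) with ((b + a + a + c) * t) by ring.
       replace (b * t + a * t + a * t - c * t) with ((b + a + a - c) * t) by ring.
       replace (b * t + c * t) with ((b + c) * t) by ring.
       replace (b * t - c * t) with ((b - c) * t) by ring.
       replace (b * t - a * t - a * t + c * t) with ((b - a - a + c) * t) by ring.
       replace (b * t - a * t - a * t - c * t) with ((b - a - a - c) * t) by ring.
       reflexivity. }
  rewrite RInt_scalR by exsum.
  rewrite RInt_plusR by exsum. rewrite RInt_plusR by exsum. rewrite RInt_plusR by exsum.
  rewrite RInt_plusR by exsum. rewrite RInt_plusR by exsum.
  rewrite !RInt_scalR by apply cos_ex.
  set (zn := Z.of_nat n). set (zg := Z.of_nat g). set (zm := Z.of_nat m).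
  assert (Eb : b = IZR (zn + 1)) by (unfold b, omega, zn; rewrite plus_IZR, <- INR_IZR_INZ; reflexivity).
  assert (Ea : a = IZR (zg + 1)) by (unfold a, omega, zg; rewrite plus_IZR, <- INR_IZR_INZ; reflexivity).
  assert (Ec : c = IZR (zm + 1)) by (unfold c, omega, zm; rewrite plus_IZR, <- INR_IZR_INZ; reflexivity).
  rewrite (RInt_cosZ _ ((zn + 1) + (zg + 1) + (zg + 1) + (zm + 1))%Z) by (rewrite Eb, Ea, Ec, !plus_IZR; ring).
  rewrite (RInt_cosZ _ ((zn + 1) + (zg + 1) + (zg + 1) - (zm + 1))%Z) by (rewrite Eb, Ea, Ec, !minus_IZR, !plus_IZR; ring).
  rewrite (RInt_cosZ _ ((zn + 1) + (zm + 1))%Z) by (rewrite Eb, Ec, !plus_IZR; ring).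
  rewrite (RInt_cosZ _ ((zn + 1) - (zm + 1))%Z) by (rewrite Eb, Ec, !minus_IZR, !plus_IZR; ring).
  rewrite (RInt_cosZ _ ((zn + 1) - (zg + 1) - (zg + 1) + (zm + 1))%Z) by (rewrite Eb, Ea, Ec, !plus_IZR, !minus_IZR, !plus_IZR; ring).
  rewrite (RInt_cosZ _ ((zn + 1) - (zg + 1) - (zg + 1) - (zm + 1))%Z) by (rewrite Eb, Ea, Ec, !minus_IZR, !plus_IZR; ring).
  unfold zn, zg, zm.
  repeat match goal with |- context [Z.eq_dec ?z 0] => destruct (Z.eq_dec z 0) end;
  repeat match goal with |- context [Nat.eqb ?x ?y] => destruct (Nat.eqb_spec x y) end;
  unfold indb; try lia; field.
Qed.

Lemma ex_series_dom (a M : nat -> R) : (forall n, Rabs (a n) <= M n) -> ex_series M -> ex_series a.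
Proof. intros H HM. apply (ex_series_le (V:=R_CompleteNormedModule) a M); auto. Qed.

Lemma ex_series_dom_abs (a M : nat -> R) : (forall n, Rabs (a n) <= M n) -> ex_series M -> ex_series (fun n => Rabs (a n)).
Proof. intros H HM. apply (ex_series_dom _ M); auto. intros n; rewrite Rabs_Rabsolu; auto. Qed.

Lemma Series_abs_le (a M : nat -> R) : (forall n, Rabs (a n) <= M n) -> ex_series M -> Rabs (Series a) <= Series M.
Proof.
  intros H HM. eapply Rle_trans. apply Series_Rabs. apply (ex_series_dom_abs _ M); auto.
  apply Series_le; auto. intros n; split; auto. apply Rabs_pos.
Qed.

Lemma Series_shift (a : nat -> R) N : ex_series a -> Series a - sum_n a N = Series (fun k => a (S N + k)%nat).
Proof.
  intros H. rewrite (Series_incr_n a (S N)) by (auto; lia). simpl pred. rewrite sum_n_Reals. ring.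
Qed.

Lemma tail_bound (a M : nat -> R) N : (forall n, Rabs (a n) <= M n) -> ex_series M ->
  Rabs (Series a - sum_n a N) <= Series M - sum_n M N.
Proof.
  intros H HM. rewrite !Series_shift; auto. apply Series_abs_le; auto.
  apply (ex_series_incr_n M (S N)); auto. apply (ex_series_dom _ M); auto.
Qed.

Lemma tail_lim (M : nat -> R) : ex_series M -> forall eps, 0 < eps -> exists N0, forall N, (N0 <= N)%nat -> Series M - sum_n M N < eps.
Proof.
  intros HM eps Heps. pose proof (Series_correct M HM) as HS.
  destruct (HS (fun x => ball (Series M) eps x)) as [N0 HN0].
  { exists (mkposreal eps Heps). intros y Hy; exact Hy. }
  exists N0. intros N HN. specialize (HN0 N HN). simpl in HN0.
  unfold ball in HN0; simpl in HN0; unfold AbsRing_ball, abs, minus, plus, opp in HN0; simpl in HN0.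
  change (@sum_n (NormedModule.AbelianMonoid R_AbsRing R_NormedModule) M N) with (@sum_n R_AbelianMonoid M N) in HN0. apply Rabs_def2 in HN0. lra.
Qed.

Lemma is_RInt_sum_n (f : nat -> R -> R) (I : nat -> R) a b N :
  (forall n, is_RInt (f n) a b (I n)) -> is_RInt (fun t => sum_n (fun n => f n t) N) a b (sum_n I N).
Proof.
  intros H. induction N.
  - apply (is_RInt_ext (V:=R_CompleteNormedModule) (f 0%nat)). intros; rewrite sum_O; reflexivity.
    rewrite sum_O. apply H.
  - apply (is_RInt_ext (V:=R_CompleteNormedModule) (fun t => plus (sum_n (fun n => f n t) N) (f (S N) t))).
    intros; rewrite sum_Sn; reflexivity.
    rewrite sum_Sn. apply (is_RInt_plus (V:=R_CompleteNormedModule)); auto.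
Qed.

Lemma series_RInt (f : nat -> R -> R) (M I : nat -> R) a b :
  (forall n, is_RInt (f n) a b (I n)) ->
  (forall n t, Rabs (f n t) <= M n) -> ex_series M ->
  is_RInt (fun t => Series (fun n => f n t)) a b (Series I).
Proof.
  intros HI HB HM.
  assert (Hf : filterlim (fun N t => sum_n (fun n => f n t) N) eventually
             (locally (T:=fct_UniformSpace R R_UniformSpace) (fun t => Series (fun n => f n t)))).
  { intros P [eps HP]. destruct (tail_lim M HM eps (cond_pos eps)) as [N0 HN0].
    exists N0. intros N HN. apply HP. intros t.
    unfold ball; simpl; unfold AbsRing_ball, abs, minus, plus, opp; simpl.
    pose proof (tail_bound (fun n => f n t) M N (fun n => HB n t) HM).
    specialize (HN0 N HN). rewrite <- Rabs_Ropp. replace (- (sum_n (fun n => f n t) N + - Series (fun n => f n t))) with (Series (fun n => f n t) - sum_n (fun n => f n t) N) by ring. lra. }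
  destruct (filterlim_RInt (V:=R_CompleteNormedModule) (fun N t => sum_n (fun n => f n t) N) a b eventually
     eventually_filter _ (fun N => sum_n I N) (fun N => is_RInt_sum_n f I a b N HI) Hf) as [If [Hh Hg]].
  replace (Series I) with If. exact Hg.
  symmetry. apply is_series_unique. exact Hh.
Qed.

Lemma sum_n_single (f : nat -> R) p N : (forall k, k <> p -> f k = 0) ->
  @sum_n R_AbelianMonoid f N = if Nat.leb p N then f p else 0.
Proof.
  intros H. induction N.
  - rewrite sum_O. destruct p; simpl. reflexivity. apply H. lia.
  - rewrite (sum_Sn (G:=R_AbelianMonoid)), IHN. unfold plus; simpl.
    destruct (Nat.leb_spec p N); destruct (Nat.leb_spec p (S N)); try lia.
    + rewrite (H (S N)) by lia. ring.
    + assert (p = S N) by lia. subst. ring.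
    + rewrite (H (S N)) by lia. ring.
Qed.

Lemma Series_single (f : nat -> R) p : (forall k, k <> p -> f k = 0) -> Series f = f p.
Proof.
  intros H. apply is_series_unique.
  intros P [eps HP]. exists p. intros N HN.
  change (@sum_n (NormedModule.AbelianMonoid R_AbsRing R_NormedModule) f N) with (@sum_n R_AbelianMonoid f N).
  rewrite (sum_n_single f p N H). destruct (Nat.leb_spec p N); [|lia]. apply HP. apply ball_center.
Qed.

Lemma ex_series_single (f : nat -> R) p : (forall k, k <> p -> f k = 0) -> ex_series f.
Proof.
  intros H. exists (f p).
  intros P [eps HP]. exists p. intros N HN.
  change (@sum_n (NormedModule.AbelianMonoid R_AbsRing R_NormedModule) f N) with (@sum_n R_AbelianMonoid f N).
  rewrite (sum_n_single f p N H). destruct (Nat.leb_spec p N); [|lia]. apply HP. apply ball_center.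
Qed.

Definition Series3 (F : nat -> nat -> nat -> R) : R :=
  Series (fun i => Series (fun j => Series (fun k => F i j k))).

Definition Dom3 (B : nat -> R) (F : nat -> nat -> nat -> R) : Prop :=
  exists c, 0 <= c /\ forall i j k, Rabs (F i j k) <= c * B i * B j * B k.


Lemma dom3_all B F : (forall n, 0 <= B n) -> ex_series B -> Dom3 B F ->
  exists c, 0 <= c /\
  (forall i j, ex_series (F i j)) /\
  (forall i j, Rabs (Series (F i j)) <= c * B i * B j * Series B) /\
  (forall i, ex_series (fun j => Series (F i j))) /\
  (forall i, Rabs (Series (fun j => Series (F i j))) <= c * B i * Series B * Series B) /\
  ex_series (fun i => Series (fun j => Series (F i j))).
Proof.
  intros HB0 HB [c [Hc HF]]. exists c. split; auto.
  assert (HSB : 0 <= Series B).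
  { apply Rle_trans with (Series (fun _ : nat => 0)).
    right. rewrite (Series_single (fun _ : nat => 0) 0%nat); auto.
    apply Series_le; auto. intros; split; [lra|auto]. }
  assert (E1 : forall i j, ex_series (F i j)).
  { intros i j. apply (ex_series_dom _ (fun k => (c * B i * B j) * B k)); auto.
    apply (ex_series_scal_l (V:=R_NormedModule) (c * B i * B j) B); auto. }
  assert (E2 : forall i j, Rabs (Series (F i j)) <= c * B i * B j * Series B).
  { intros i j. rewrite <- Series_scal_l. apply Series_abs_le; auto.
    apply (ex_series_scal_l (V:=R_NormedModule) (c * B i * B j) B); auto. }
  assert (E3 : forall i, ex_series (fun j => Series (F i j))).
  { intros i. apply (ex_series_dom _ (fun j => (c * B i * Series B) * B j)).
    intros j. eapply Rle_trans; [apply E2|]. right; ring.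
    apply (ex_series_scal_l (V:=R_NormedModule) (c * B i * Series B) B); auto. }
  assert (E4 : forall i, Rabs (Series (fun j => Series (F i j))) <= c * B i * Series B * Series B).
  { intros i. replace (c * B i * Series B * Series B) with ((c * B i * Series B) * Series B) by ring.
    rewrite <- Series_scal_l. apply Series_abs_le.
    intros j. eapply Rle_trans; [apply E2|]. right; ring.
    apply (ex_series_scal_l (V:=R_NormedModule) (c * B i * Series B) B); auto. }
  repeat split; auto.
  apply (ex_series_dom _ (fun i => (c * Series B * Series B) * B i)).
  intros i. eapply Rle_trans; [apply E4|]. right; ring.
  apply (ex_series_scal_l (V:=R_NormedModule) (c * Series B * Series B) B); auto.
Qed.

Lemma S3_plus B F G : (forall n, 0 <= B n) -> ex_series B -> Dom3 B F -> Dom3 B G ->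
  Series3 (fun i j k => F i j k + G i j k) = Series3 F + Series3 G.
Proof.
  intros HB0 HB HF HG.
  destruct (dom3_all B F HB0 HB HF) as [c1 [_ [F1 [_ [F3 [_ F5]]]]]].
  destruct (dom3_all B G HB0 HB HG) as [c2 [_ [G1 [_ [G3 [_ G5]]]]]].
  unfold Series3. rewrite <- Series_plus by auto. apply Series_ext. intros i.
  rewrite <- Series_plus by auto. apply Series_ext. intros j.
  apply Series_plus; auto.
Qed.

Lemma S3_scal c F : Series3 (fun i j k => c * F i j k) = c * Series3 F.
Proof.
  unfold Series3. rewrite <- Series_scal_l. apply Series_ext. intros i.
  rewrite <- Series_scal_l. apply Series_ext. intros j. apply Series_scal_l.
Qed.

Lemma Series_nonneg (B : nat -> R) : (forall n, 0 <= B n) -> ex_series B -> 0 <= Series B.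
Proof.
  intros HB0 HB. apply Rle_trans with (Series (fun _ : nat => 0)).
  right. rewrite (Series_single (fun _ : nat => 0) 0%nat); auto.
  apply Series_le; auto. intros; split; [lra|auto].
Qed.

Definition cos4 i j k m t := cos (omega i * t) * cos (omega j * t) * cos (omega k * t) * cos (omega m * t).

Lemma abs_mul_le1 a b : Rabs a <= 1 -> Rabs b <= 1 -> Rabs (a * b) <= 1.
Proof. intros. rewrite Rabs_mult. pose proof (Rabs_pos a); pose proof (Rabs_pos b). nra. Qed.

Lemma cos4_bound i j k m t : Rabs (cos4 i j k m t) <= 1.
Proof.
  unfold cos4.
  assert (H : forall x, Rabs (cos x) <= 1) by (intros; apply Rabs_le; apply COS_bound).
  repeat apply abs_mul_le1; apply H.
Qed.

Lemma cos4_ex i j k m : ex_RInt (cos4 i j k m) 0 (2 * PI).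
Proof.
  apply cont_ex. intros x. unfold cos4.
  repeat apply cR_mult; apply continuous_cos_comp; apply cR_mult; try apply cR_const; apply cR_id.
Qed.

Lemma is_RInt_g (c : R) i j k m : is_RInt (fun t => c * cos4 i j k m t) 0 (2 * PI) (c * J i j k m).
Proof.
  apply (is_RInt_scal (V:=R_CompleteNormedModule) (cos4 i j k m) 0 (2 * PI) c (J i j k m)).
  unfold J. apply (RInt_correct (V:=R_CompleteNormedModule)). apply cos4_ex.
Qed.

Definition gfun (v : seqR) (m i j k : nat) (t : R) : R :=
  (- (Ccoef i j k m) * (v i * v j * v k)) * cos4 i j k m t.

Lemma integrand_eq (v : seqR) m t :
  Phi t (fmap (Phi t v)) m = Series (fun i => Series (fun j => Series (fun k => gfun v m i j k t))).
Proof.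
  unfold Phi at 1. unfold fmap.
  rewrite <- Series_opp, <- Series_scal_r. apply Series_ext; intros i.
  rewrite <- Series_opp, <- Series_scal_r. apply Series_ext; intros j.
  rewrite <- Series_opp, <- Series_scal_r. apply Series_ext; intros k.
  unfold gfun, cos4, Phi. ring.
Qed.

Lemma gfun_bound (v : seqR) m i j k t :
  Rabs (gfun v m i j k t) <= (2 * (INR m + 1)) * ((INR i + 1) * Rabs (v i)) * ((INR j + 1) * Rabs (v j)) * ((INR k + 1) * Rabs (v k)).
Proof.
  unfold gfun. rewrite Rabs_mult. rewrite Rabs_mult. rewrite Rabs_Ropp.
  pose proof (C_bound i j k m). pose proof (cos4_bound i j k m t).
  rewrite !Rabs_mult.
  assert (0 <= Rabs (v i) * Rabs (v j) * Rabs (v k)) by (repeat apply Rmult_le_pos; apply Rabs_pos).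
  apply Rle_trans with (2 * ((INR i + 1) * (INR j + 1) * (INR k + 1) * (INR m + 1)) * (Rabs (v i) * Rabs (v j) * Rabs (v k)) * 1).
  apply Rmult_le_compat; [apply Rmult_le_pos; [apply Rabs_pos| exact H1] | apply Rabs_pos | apply Rmult_le_compat_r; [exact H1 | exact H] | exact H0].
  right; ring.
Qed.

Lemma Mmap_formula (v : seqR) m : ex_series (fun i => (INR i + 1) * Rabs (v i)) ->
  Mmap v m = omega m ^ 2 * v m + / (2 * PI) * Series3 (fun i j k => - (Ccoef i j k m) * (v i * v j * v k) * J i j k m).
Proof.
  intros HW. set (W := fun i => (INR i + 1) * Rabs (v i)).
  assert (HW0 : forall i, 0 <= W i) by (intros; unfold W; apply Rmult_le_pos; [pose proof (pos_INR i); lra | apply Rabs_pos]).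
  assert (HSW := Series_nonneg W HW0 HW).
  set (c := 2 * (INR m + 1)).
  assert (Hc : 0 <= c) by (unfold c; pose proof (pos_INR m); lra).
  unfold Mmap. f_equal. f_equal.
  rewrite (RInt_extR _ (fun t => Series (fun i => Series (fun j => Series (fun k => gfun v m i j k t))))).
  2:{ intros; apply integrand_eq. }
  apply (is_RInt_unique (V:=R_CompleteNormedModule)). unfold Series3.
  apply (series_RInt _ (fun i => (c * Series W * Series W) * W i)).
  - intros i. apply (series_RInt _ (fun j => (c * W i * Series W) * W j)).
    + intros j. apply (series_RInt _ (fun k => (c * W i * W j) * W k)).
      * intros k. apply is_RInt_g.
      * intros k t. eapply Rle_trans; [apply gfun_bound|]. right; unfold W, c; ring.
      * apply (ex_series_scal_l (V:=R_NormedModule) (c * W i * W j) W); auto.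
    + intros j t. replace (c * W i * Series W * W j) with ((c * W i * W j) * Series W) by ring.
      rewrite <- Series_scal_l. apply Series_abs_le.
      * intros k. eapply Rle_trans; [apply gfun_bound|]. right; unfold W, c; ring.
      * apply (ex_series_scal_l (V:=R_NormedModule) (c * W i * W j) W); auto.
    + apply (ex_series_scal_l (V:=R_NormedModule) (c * W i * Series W) W); auto.
  - intros i t. replace (c * Series W * Series W * W i) with ((c * W i * Series W) * Series W) by ring.
    rewrite <- Series_scal_l. apply Series_abs_le.
    + intros j. replace (c * W i * Series W * W j) with ((c * W i * W j) * Series W) by ring.
      rewrite <- Series_scal_l. apply Series_abs_le.
      * intros k. eapply Rle_trans; [apply gfun_bound|]. right; unfold W, c; ring.
      * apply (ex_series_scal_l (V:=R_NormedModule) (c * W i * W j) W); auto.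
    + apply (ex_series_scal_l (V:=R_NormedModule) (c * W i * Series W) W); auto.
  - apply (ex_series_scal_l (V:=R_NormedModule) (c * Series W * Series W) W); auto.
Qed.

Lemma plus_R (a b : R) : @plus R_AbelianMonoid a b = a + b.
Proof. reflexivity. Qed.

Lemma sumn_tele N : @sum_n R_AbelianMonoid (fun n => / (INR n + 1) - / (INR n + 2)) N = 1 - / (INR N + 2).
Proof.
  induction N.
  - rewrite (sum_O (G:=R_AbelianMonoid)). simpl. field.
  - rewrite (sum_Sn (G:=R_AbelianMonoid)), IHN. rewrite plus_R. rewrite S_INR.
    match goal with |- ?a = ?b => change (@eq R a b) end. pose proof (pos_INR N). field. split; lra.
Qed.

Lemma ex_series_tele : ex_series (fun n => / (INR n + 1) - / (INR n + 2)).
Proof.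
  exists 1.
  assert (H : is_lim_seq (fun N => 1 - / (INR N + 2)) (1 - 0)).
  { apply is_lim_seq_minus'. apply is_lim_seq_const.
    replace (Finite 0) with (Rbar_inv p_infty) by reflexivity.
    apply is_lim_seq_inv; [|discriminate].
    apply (is_lim_seq_plus _ _ p_infty 2). apply is_lim_seq_INR. apply is_lim_seq_const. easy. }
  rewrite Rminus_0_r in H.
  intros P HP. destruct (H P HP) as [N0 HN0]. exists N0. intros N HN.
  change (@sum_n (NormedModule.AbelianMonoid R_AbsRing R_NormedModule) (fun n => / (INR n + 1) - / (INR n + 2)) N)
    with (@sum_n R_AbelianMonoid (fun n => / (INR n + 1) - / (INR n + 2)) N).
  rewrite sumn_tele. apply HN0; auto.
Qed.

Lemma ex_series_inv_sq : ex_series (fun n => / (INR n + 1) ^ 2).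
Proof.
  apply (ex_series_dom _ (fun n => 2 * (/ (INR n + 1) - / (INR n + 2)))).
  - intros n. pose proof (pos_INR n).
    rewrite Rabs_right by (apply Rle_ge; left; apply Rinv_0_lt_compat; apply pow_lt; lra).
    replace (2 * (/ (INR n + 1) - / (INR n + 2))) with (/ ((INR n + 1) * (INR n + 2) / 2)) by (field; lra).
    apply Rinv_le_contravar. apply Rmult_lt_0_compat; [nra|lra]. simpl. nra.
  - apply (ex_series_scal_l (V:=R_NormedModule) 2). apply ex_series_tele.
Qed.

Lemma l2s_W (s : R) (eta : seqR) : 0 <= s -> l2s (s + 3) eta -> ex_series (fun i => (INR i + 1) * Rabs (eta i)).
Proof.
  intros Hs Hl. unfold l2s in Hl.
  apply ex_series_incr_1.
  apply (ex_series_dom _ (fun i => / 2 * (16 * (Rpower (INR (S i)) (2 * (s + 3)) * eta (S i) ^ 2) + / (INR (S i) + 1) ^ 2))).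
  - intros i. set (n := INR (S i)). assert (Hn : 1 <= n) by (unfold n; rewrite S_INR; pose proof (pos_INR i); lra).
    set (x := (n + 1) ^ 2 * Rabs (eta (S i))). set (y := / (n + 1)).
    assert (Exy : (n + 1) * Rabs (eta (S i)) = x * y) by (unfold x, y; field; lra).
    rewrite Rabs_right by (apply Rle_ge, Rmult_le_pos; [lra|apply Rabs_pos]).
    rewrite Exy.
    assert (Hx2 : x ^ 2 <= 16 * (Rpower n (2 * (s + 3)) * eta (S i) ^ 2)).
    { unfold x. rewrite <- (pow2_abs (eta (S i))). 
      assert (H4 : (n + 1) ^ 4 <= 16 * Rpower n (2 * (s + 3))).
      { apply Rle_trans with (16 * Rpower n 4).
        - replace 4 with (INR 4) by (simpl; ring). rewrite Rpower_pow by lra.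
          replace (16 * n ^ 4) with ((2 * n) ^ 4) by ring. apply pow_incr. lra.
        - apply Rmult_le_compat_l; [lra|]. apply Rle_Rpower; lra. }
      replace (((n + 1) ^ 2 * Rabs (eta (S i))) ^ 2) with ((n + 1) ^ 4 * (Rabs (eta (S i)) ^ 2)) by ring.
      replace (16 * (Rpower n (2 * (s + 3)) * Rabs (eta (S i)) ^ 2)) with ((16 * Rpower n (2 * (s + 3))) * Rabs (eta (S i)) ^ 2) by ring.
      apply Rmult_le_compat_r; auto. apply pow2_ge_0. }
    assert (Hy2 : y ^ 2 = / (n + 1) ^ 2) by (unfold y; rewrite Rinv_pow; lra).
    rewrite <- Hy2. assert (0 <= (x - y) ^ 2) by apply pow2_ge_0. nra.
  - apply (ex_series_scal_l (V:=R_NormedModule) (/2)).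
    apply (ex_series_plus (V:=R_NormedModule)).
    + apply (ex_series_scal_l (V:=R_NormedModule) 16). apply (ex_series_incr_1 (fun i => Rpower (INR i) (2 * (s + 3)) * eta i ^ 2)). exact Hl.
    + apply (ex_series_incr_1 (fun i => / (INR i + 1) ^ 2)). apply ex_series_inv_sq.
Qed.

Definition aC (m i j k : nat) : R := - (Ccoef i j k m) * J i j k m.

Lemma J_bound i j k m : Rabs (J i j k m) <= 2 * PI.
Proof.
  unfold J. pose proof PI_RGT_0.
  eapply Rle_trans. apply (abs_RInt_le_const _ _ _ 1). lra. apply cos4_ex. intros; apply cos4_bound.
  lra.
Qed.

Lemma aC_bound m i j k : Rabs (aC m i j k) <= (4 * PI * (INR m + 1)) * ((INR i + 1) * (INR j + 1) * (INR k + 1)).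
Proof.
  unfold aC. rewrite Rabs_mult, Rabs_Ropp. pose proof (C_bound i j k m). pose proof (J_bound i j k m).
  pose proof PI_RGT_0.
  apply Rle_trans with (2 * ((INR i + 1) * (INR j + 1) * (INR k + 1) * (INR m + 1)) * (2 * PI)).
  apply Rmult_le_compat; auto; apply Rabs_pos. right; ring.
Qed.

Lemma Dom3_plus B F G : Dom3 B F -> Dom3 B G -> (forall n, 0 <= B n) -> Dom3 B (fun i j k => F i j k + G i j k).
Proof.
  intros [c1 [Hc1 H1]] [c2 [Hc2 H2]] HB. exists (c1 + c2). split; [lra|].
  intros i j k. eapply Rle_trans. apply Rabs_triang.
  specialize (H1 i j k). specialize (H2 i j k). nra.
Qed.

Lemma Dom3_scal B c F : Dom3 B F -> Dom3 B (fun i j k => c * F i j k).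
Proof.
  intros [c1 [Hc1 H1]]. exists (Rabs c * c1). split. apply Rmult_le_pos; auto; apply Rabs_pos.
  intros i j k. rewrite Rabs_mult. specialize (H1 i j k).
  replace (Rabs c * c1 * B i * B j * B k) with (Rabs c * (c1 * B i * B j * B k)) by ring.
  apply Rmult_le_compat_l; auto. apply Rabs_pos.
Qed.

Lemma Series3_ext F G : (forall i j k, F i j k = G i j k) -> Series3 F = Series3 G.
Proof.
  intros H. unfold Series3. apply Series_ext; intros i. apply Series_ext; intros j. apply Series_ext; intros k. auto.
Qed.

Lemma triple_bound (a b c a' b' c' : R) : Rabs a <= a' -> Rabs b <= b' -> Rabs c <= c' -> Rabs (a * b * c) <= a' * b' * c'.
Proof.
  intros. rewrite !Rabs_mult. pose proof (Rabs_pos a); pose proof (Rabs_pos b); pose proof (Rabs_pos c).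
  apply Rmult_le_compat; try apply Rmult_le_pos; auto. apply Rmult_le_compat; auto.
Qed.

Lemma Dom3_aP (x y : seqR) m (P : nat -> nat -> nat -> R) :
  (forall i j k, Rabs (P i j k) <= 3 * ((Rabs (x i) + Rabs (y i)) * (Rabs (x j) + Rabs (y j)) * (Rabs (x k) + Rabs (y k)))) ->
  Dom3 (fun i => (INR i + 1) * (Rabs (x i) + Rabs (y i))) (fun i j k => aC m i j k * P i j k).
Proof.
  intros HP. exists (3 * (4 * PI * (INR m + 1))). split.
  { pose proof PI_RGT_0; pose proof (pos_INR m). apply Rmult_le_pos; [lra|]. apply Rmult_le_pos; lra. }
  intros i j k. rewrite Rabs_mult.
  apply Rle_trans with ((4 * PI * (INR m + 1)) * ((INR i + 1) * (INR j + 1) * (INR k + 1)) *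
     (3 * ((Rabs (x i) + Rabs (y i)) * (Rabs (x j) + Rabs (y j)) * (Rabs (x k) + Rabs (y k))))).
  apply Rmult_le_compat; try apply Rabs_pos; auto. apply aC_bound.
  right; ring.
Qed.

Lemma absxy_le (x y : R) : Rabs x <= Rabs x + Rabs y.
Proof. pose proof (Rabs_pos y); lra. Qed.
Lemma absyx_le (x y : R) : Rabs y <= Rabs x + Rabs y.
Proof. pose proof (Rabs_pos x); lra. Qed.

Lemma P_bound3 (a b c : R) (xa ya xb yb xc yc : R) :
  Rabs a <= Rabs xa + Rabs ya -> Rabs b <= Rabs xb + Rabs yb -> Rabs c <= Rabs xc + Rabs yc ->
  Rabs (a * b * c) <= (Rabs xa + Rabs ya) * (Rabs xb + Rabs yb) * (Rabs xc + Rabs yc).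
Proof. intros; apply triple_bound; auto. Qed.

Lemma sum3_bound (p q r M : R) : Rabs p <= M -> Rabs q <= M -> Rabs r <= M -> Rabs (p + q + r) <= 3 * M.
Proof.
  intros. eapply Rle_trans. apply Rabs_triang. eapply Rle_trans. apply Rplus_le_compat_r. apply Rabs_triang. lra.
Qed.

Definition P0 (x y : seqR) i j k := x i * x j * x k.
Definition P1 (x y : seqR) i j k := y i * x j * x k + x i * y j * x k + x i * x j * y k.
Definition P2 (x y : seqR) i j k := y i * y j * x k + y i * x j * y k + x i * y j * y k.
Definition P3 (x y : seqR) i j k := y i * y j * y k.

Definition Bxy (x y : seqR) := fun i => (INR i + 1) * (Rabs (x i) + Rabs (y i)).

Lemma Bxy_pos x y n : 0 <= Bxy x y n.
Proof. unfold Bxy. apply Rmult_le_pos; [pose proof (pos_INR n); lra|]. pose proof (Rabs_pos (x n)); pose proof (Rabs_pos (y n)); lra. Qed.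

Ltac pb := repeat first [apply absxy_le | apply absyx_le | apply P_bound3].

Lemma Dom3_P0 x y m : Dom3 (Bxy x y) (fun i j k => aC m i j k * P0 x y i j k).
Proof.
  apply Dom3_aP. intros i j k. unfold P0.
  assert (H : Rabs (x i * x j * x k) <= (Rabs (x i) + Rabs (y i)) * (Rabs (x j) + Rabs (y j)) * (Rabs (x k) + Rabs (y k))) by pb.
  assert (0 <= (Rabs (x i) + Rabs (y i)) * (Rabs (x j) + Rabs (y j)) * (Rabs (x k) + Rabs (y k))) by (pose proof (Rabs_pos (x i * x j * x k)); lra).
  lra.
Qed.

Lemma Dom3_P3 x y m : Dom3 (Bxy x y) (fun i j k => aC m i j k * P3 x y i j k).
Proof.
  apply Dom3_aP. intros i j k. unfold P3.
  assert (H : Rabs (y i * y j * y k) <= (Rabs (x i) + Rabs (y i)) * (Rabs (x j) + Rabs (y j)) * (Rabs (x k) + Rabs (y k))) by pb.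
  assert (0 <= (Rabs (x i) + Rabs (y i)) * (Rabs (x j) + Rabs (y j)) * (Rabs (x k) + Rabs (y k))) by (pose proof (Rabs_pos (y i * y j * y k)); lra).
  lra.
Qed.

Lemma Dom3_P1 x y m : Dom3 (Bxy x y) (fun i j k => aC m i j k * P1 x y i j k).
Proof.
  apply Dom3_aP. intros i j k. unfold P1. apply sum3_bound; pb.
Qed.

Lemma Dom3_P2 x y m : Dom3 (Bxy x y) (fun i j k => aC m i j k * P2 x y i j k).
Proof.
  apply Dom3_aP. intros i j k. unfold P2. apply sum3_bound; pb.
Qed.

Lemma Mmap_poly (x y : seqR) m : ex_series (Bxy x y) -> forall e,
  Mmap (fun n => x n + e * y n) m = omega m ^ 2 * (x m + e * y m) + / (2 * PI) *
    (Series3 (fun i j k => aC m i j k * P0 x y i j k) + e * Series3 (fun i j k => aC m i j k * P1 x y i j k)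
     + e ^ 2 * Series3 (fun i j k => aC m i j k * P2 x y i j k) + e ^ 3 * Series3 (fun i j k => aC m i j k * P3 x y i j k)).
Proof.
  intros HB e.
  assert (HB0 := Bxy_pos x y).
  rewrite Mmap_formula.
  2:{ apply (ex_series_dom _ (fun i => (1 + Rabs e) * Bxy x y i)).
      - intros i. unfold Bxy. pose proof (pos_INR i). rewrite Rabs_mult. rewrite (Rabs_right (INR i + 1)) by lra.
        rewrite Rabs_Rabsolu.
        replace ((1 + Rabs e) * ((INR i + 1) * (Rabs (x i) + Rabs (y i)))) with ((INR i + 1) * ((1 + Rabs e) * (Rabs (x i) + Rabs (y i)))) by ring.
        apply Rmult_le_compat_l; [lra|]. eapply Rle_trans. apply Rabs_triang. rewrite Rabs_mult.
        pose proof (Rabs_pos e); pose proof (Rabs_pos (x i)); pose proof (Rabs_pos (y i)). nra.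
      - apply (ex_series_scal_l (V:=R_NormedModule) (1 + Rabs e)). exact HB. }
  f_equal. f_equal.
  rewrite (Series3_ext _ (fun i j k => aC m i j k * P0 x y i j k + e * (aC m i j k * P1 x y i j k)
      + e ^ 2 * (aC m i j k * P2 x y i j k) + e ^ 3 * (aC m i j k * P3 x y i j k))).
  2:{ intros; unfold aC, P0, P1, P2, P3. ring. }
  assert (D0 := Dom3_P0 x y m). assert (D1 := Dom3_scal _ e _ (Dom3_P1 x y m)).
  assert (D2 := Dom3_scal _ (e ^ 2) _ (Dom3_P2 x y m)). assert (D3 := Dom3_scal _ (e ^ 3) _ (Dom3_P3 x y m)).
  rewrite (S3_plus (Bxy x y)); auto. 2:{ apply Dom3_plus; auto. apply Dom3_plus; auto. }
  rewrite (S3_plus (Bxy x y)); auto. 2:{ apply Dom3_plus; auto. }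
  rewrite (S3_plus (Bxy x y)); auto.
  rewrite !S3_scal. reflexivity.
Qed.

Lemma dM_S1 (x y : seqR) m : ex_series (Bxy x y) ->
  Derive (fun e => Mmap (fun n => x n + e * y n) m) 0 =
  omega m ^ 2 * y m + / (2 * PI) * Series3 (fun i j k => aC m i j k * P1 x y i j k).
Proof.
  intros HB. rewrite (Derive_ext _ _ _ (Mmap_poly x y m HB)).
  apply is_derive_unique. auto_derive; auto. ring.
Qed.

Definition xiK (g : nat) (K : R) : seqR := fun n => if Nat.eqb n g then K else 0.

Lemma xiK_g g K : xiK g K g = K.
Proof. unfold xiK. rewrite Nat.eqb_refl. reflexivity. Qed.
Lemma xiK_ne g K n : n <> g -> xiK g K n = 0.
Proof. intros H. unfold xiK. apply Nat.eqb_neq in H. rewrite H. reflexivity. Qed.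

Lemma Series_zero : Series (fun _ : nat => 0) = 0.
Proof. rewrite (Series_single (fun _ : nat => 0) 0%nat); auto. Qed.

Lemma Series_two (f : nat -> R) p q : p <> q -> (forall n, n <> p -> n <> q -> f n = 0) -> Series f = f p + f q.
Proof.
  intros Hpq H.
  rewrite (Series_ext f (fun n => (if Nat.eqb n p then f p else 0) + (if Nat.eqb n q then f q else 0))).
  2:{ intros n. destruct (Nat.eqb_spec n p); destruct (Nat.eqb_spec n q); subst; try lia; try ring. rewrite Rplus_0_r. apply H; auto. }
  rewrite Series_plus.
  - rewrite (Series_single _ p), (Series_single _ q).
    + rewrite Nat.eqb_refl, Nat.eqb_refl. reflexivity.
    + intros k Hk. apply Nat.eqb_neq in Hk. rewrite Hk. reflexivity.
    + intros k Hk. apply Nat.eqb_neq in Hk. rewrite Hk. reflexivity.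
  - apply (ex_series_single _ p). intros k Hk. apply Nat.eqb_neq in Hk. rewrite Hk. reflexivity.
  - apply (ex_series_single _ q). intros k Hk. apply Nat.eqb_neq in Hk. rewrite Hk. reflexivity.
Qed.

Lemma J_12 i j k m : J i j k m = J j i k m.
Proof. unfold J. apply RInt_extR. intros; ring. Qed.
Lemma J_23 i j k m : J i j k m = J i k j m.
Proof. unfold J. apply RInt_extR. intros; ring. Qed.

Lemma aC_12 m i j k : aC m i j k = aC m j i k.
Proof. unfold aC. rewrite C_12, J_12. reflexivity. Qed.
Lemma aC_23 m i j k : aC m i j k = aC m i k j.
Proof. unfold aC. rewrite C_23, J_23. reflexivity. Qed.

Lemma S1_collapse g K (y : seqR) m : ex_series (Bxy (xiK g K) y) ->
  Series3 (fun i j k => aC m i j k * P1 (xiK g K) y i j k) = 3 * K ^ 2 * Series (fun n => aC m n g g * y n).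
Proof.
  intros HB. set (x := xiK g K).
  assert (HB0 := Bxy_pos x y).
  rewrite (Series3_ext _ (fun i j k => (aC m i j k * (y i * x j * x k) + aC m i j k * (x i * y j * x k)) + aC m i j k * (x i * x j * y k))).
  2:{ intros; unfold P1; ring. }
  assert (D1 : Dom3 (Bxy x y) (fun i j k => aC m i j k * (y i * x j * x k))).
  { apply Dom3_aP. intros. assert (H := P_bound3 (y i) (x j) (x k) (x i) (y i) (x j) (y j) (x k) (y k)).
    assert (Rabs (y i * x j * x k) <= (Rabs (x i) + Rabs (y i)) * (Rabs (x j) + Rabs (y j)) * (Rabs (x k) + Rabs (y k))) by (apply H; pb).
    pose proof (Rabs_pos (y i * x j * x k)). lra. }
  assert (D2 : Dom3 (Bxy x y) (fun i j k => aC m i j k * (x i * y j * x k))).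
  { apply Dom3_aP. intros. assert (H := P_bound3 (x i) (y j) (x k) (x i) (y i) (x j) (y j) (x k) (y k)).
    assert (Rabs (x i * y j * x k) <= (Rabs (x i) + Rabs (y i)) * (Rabs (x j) + Rabs (y j)) * (Rabs (x k) + Rabs (y k))) by (apply H; pb).
    pose proof (Rabs_pos (x i * y j * x k)). lra. }
  assert (D3 : Dom3 (Bxy x y) (fun i j k => aC m i j k * (x i * x j * y k))).
  { apply Dom3_aP. intros. assert (H := P_bound3 (x i) (x j) (y k) (x i) (y i) (x j) (y j) (x k) (y k)).
    assert (Rabs (x i * x j * y k) <= (Rabs (x i) + Rabs (y i)) * (Rabs (x j) + Rabs (y j)) * (Rabs (x k) + Rabs (y k))) by (apply H; pb).
    pose proof (Rabs_pos (x i * x j * y k)). lra. }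
  rewrite (S3_plus (Bxy x y)); auto. 2:{ apply Dom3_plus; auto. }
  rewrite (S3_plus (Bxy x y)); auto.
  unfold Series3.
  rewrite (Series_ext (fun i => Series (fun j => Series (fun k => aC m i j k * (y i * x j * x k))))
                      (fun i => aC m i g g * y i * K ^ 2)).
  2:{ intros i. rewrite (Series_ext _ (fun j => aC m i j g * (y i * x j * K))).
      2:{ intros j. rewrite (Series_single _ g). unfold x; rewrite xiK_g; reflexivity.
          intros k Hk. unfold x; rewrite (xiK_ne g K k Hk). ring. }
      rewrite (Series_single _ g). unfold x; rewrite xiK_g; ring.
      intros j Hj. unfold x; rewrite (xiK_ne g K j Hj). ring. }
  rewrite (Series_single (fun i => Series (fun j => Series (fun k => aC m i j k * (x i * y j * x k)))) g).
  2:{ intros i Hi. rewrite (Series_ext _ (fun _ => 0)). apply Series_zero.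
      intros j. rewrite (Series_ext _ (fun _ => 0)). apply Series_zero.
      intros k. unfold x; rewrite (xiK_ne g K i Hi). ring. }
  rewrite (Series_ext (fun j => Series (fun k => aC m g j k * (x g * y j * x k))) (fun j => aC m j g g * y j * K ^ 2)).
  2:{ intros j. rewrite (Series_single _ g). unfold x; rewrite xiK_g. rewrite (aC_12 m g j g). ring.
      intros k Hk. unfold x; rewrite (xiK_ne g K k Hk). ring. }
  rewrite (Series_single (fun i => Series (fun j => Series (fun k => aC m i j k * (x i * x j * y k)))) g).
  2:{ intros i Hi. rewrite (Series_ext _ (fun _ => 0)). apply Series_zero.
      intros j. rewrite (Series_ext _ (fun _ => 0)). apply Series_zero.
      intros k. unfold x; rewrite (xiK_ne g K i Hi). ring. }
  rewrite (Series_single (fun j => Series (fun k => aC m g j k * (x g * x j * y k))) g).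
  2:{ intros j Hj. rewrite (Series_ext _ (fun _ => 0)). apply Series_zero.
      intros k. unfold x; rewrite (xiK_ne g K j Hj). ring. }
  rewrite (Series_ext (fun k => aC m g g k * (x g * x g * y k)) (fun k => aC m k g g * y k * K ^ 2)).
  2:{ intros k. unfold x; rewrite xiK_g. rewrite (aC_23 m g g k), (aC_12 m g k g). ring. }
  rewrite !Series_scal_r. rewrite <- (Series_scal_l (3 * K ^ 2)).
  rewrite Series_scal_l. ring.
Qed.

Lemma C_perm14 n g m : Ccoef n g g m = Ccoef m g g n.
Proof. rewrite C_34, C_23, C_12, C_23, C_34. reflexivity. Qed.

Lemma aC_val m g n : aC m n g g = - (PI / 4) * Ccoef n g g m * (2 * indb (Nat.eqb n m) + indb (Nat.eqb (n + m) (2 * g))).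
Proof.
  unfold aC. rewrite J_val.
  destruct (Nat.eqb_spec n (m + 2 * g + 2)).
  { rewrite (C_sel n g g m) by lia. ring. }
  destruct (Nat.eqb_spec m (n + 2 * g + 2)).
  { rewrite C_perm14, (C_sel m g g n) by lia. ring. }
  unfold indb at 3 4. ring.
Qed.

Lemma row_sum m g (y : seqR) : Series (fun n => aC m n g g * y n) =
  - (PI / 4) * (2 * Ccoef m g g m * y m + (if Nat.leb m (2 * g) then Ccoef (2 * g - m) g g m * y (2 * g - m)%nat else 0)).
Proof.
  destruct (Nat.leb_spec m (2 * g)).
  - destruct (Nat.eq_dec m g) as [->|Hmg].
    + rewrite (Series_single _ g).
      * rewrite aC_val. replace (2 * g - g)%nat with g by lia. rewrite Nat.eqb_refl.
        replace (g + g =? 2 * g)%nat with true by (symmetry; apply Nat.eqb_eq; lia). unfold indb. ring.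
      * intros k Hk. rewrite aC_val. destruct (Nat.eqb_spec k g); [lia|].
        destruct (Nat.eqb_spec (k + g) (2 * g)); [lia|]. unfold indb. ring.
    + rewrite (Series_two _ m (2 * g - m)).
      * rewrite !aC_val. rewrite Nat.eqb_refl.
        destruct (Nat.eqb_spec (m + m) (2 * g)); [lia|].
        destruct (Nat.eqb_spec (2 * g - m) m); [lia|].
        destruct (Nat.eqb_spec (2 * g - m + m) (2 * g)); [|lia]. unfold indb. ring.
      * lia.
      * intros k H1 H2. rewrite aC_val. destruct (Nat.eqb_spec k m); [lia|].
        destruct (Nat.eqb_spec (k + m) (2 * g)); [lia|]. unfold indb. ring.
  - rewrite (Series_single _ m).
    + rewrite aC_val. rewrite Nat.eqb_refl. destruct (Nat.eqb_spec (m + m) (2 * g)); [lia|]. unfold indb. ring.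
    + intros k Hk. rewrite aC_val. destruct (Nat.eqb_spec k m); [lia|].
      destruct (Nat.eqb_spec (k + m) (2 * g)); [lia|]. unfold indb. ring.
Qed.

Lemma ex_series_two (f : nat -> R) p q : (forall n, n <> p -> n <> q -> f n = 0) -> ex_series f.
Proof.
  intros H. destruct (Nat.eq_dec p q) as [<-|Hpq].
  - apply (ex_series_single _ p). intros k Hk; apply H; auto.
  - apply (ex_series_ext (V:=R_NormedModule) (fun n => (if Nat.eqb n p then f p else 0) + (if Nat.eqb n q then f q else 0))).
    + intros n. destruct (Nat.eqb_spec n p); destruct (Nat.eqb_spec n q); subst; try lia; simpl; try ring; try (rewrite Rplus_0_r; symmetry; apply H; auto).
    + apply (ex_series_plus (V:=R_NormedModule)).
      * apply (ex_series_single _ p). intros k Hk. apply Nat.eqb_neq in Hk. rewrite Hk. reflexivity.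
      * apply (ex_series_single _ q). intros k Hk. apply Nat.eqb_neq in Hk. rewrite Hk. reflexivity.
Qed.

Lemma Bxy_ex g K s (eta : seqR) : 0 <= s -> l2s (s + 3) eta -> ex_series (Bxy (xiK g K) eta).
Proof.
  intros Hs Hl.
  apply (ex_series_ext (V:=R_NormedModule) (fun i => (INR i + 1) * Rabs (xiK g K i) + (INR i + 1) * Rabs (eta i))).
  { intros i; unfold Bxy; match goal with |- ?a = ?b => change (@eq R a b) end; ring. }
  apply (ex_series_plus (V:=R_NormedModule)).
  - apply (ex_series_single _ g). intros k Hk. rewrite (xiK_ne g K k Hk), Rabs_R0. ring.
  - apply (l2s_W s); auto.
Qed.

Lemma dM_formula g K s (eta : seqR) m : 0 <= s -> l2s (s + 3) eta ->
  dM (xiK g K) eta m = omega m ^ 2 * eta m - 3 * K ^ 2 / 8 *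
    (2 * Ccoef m g g m * eta m + (if Nat.leb m (2 * g) then Ccoef (2 * g - m) g g m * eta (2 * g - m)%nat else 0)).
Proof.
  intros Hs Hl. unfold dM.
  rewrite dM_S1 by (apply (Bxy_ex g K s); auto).
  rewrite S1_collapse by (apply (Bxy_ex g K s); auto).
  rewrite row_sum. pose proof PI_RGT_0. field. lra.
Qed.

Lemma omega_pos n : 0 < omega n.
Proof. unfold omega. pose proof (pos_INR n). lra. Qed.

Lemma l2s_fin (s : R) (eta : seqR) p q : (forall n, n <> p -> n <> q -> eta n = 0) -> l2s s eta.
Proof.
  intros H. unfold l2s. apply (ex_series_two _ p q). intros n H1 H2. rewrite H; auto. simpl. ring.
Qed.

Lemma C_gm g m : Ccoef m g g m = Ccoef g g m m.
Proof. rewrite C_12, C_23. reflexivity. Qed.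

Lemma C_cross1 g n : Ccoef (2 * g - n) g g n = Ccoef g (2 * g - n) g n.
Proof. apply C_12. Qed.

Lemma C_cross2 g n : Ccoef n g g (2 * g - n) = Ccoef g (2 * g - n) g n.
Proof. rewrite C_12, C_34, C_23, C_34. reflexivity. Qed.

Theorem lemma7p1 (gamma : nat) (s : R) (hs : 0 <= s) (K : R)
  (hK : K = 2 * omega gamma * sqrt (2 / (3 * Ccoef gamma gamma gamma gamma))
        \/ K = - (2 * omega gamma * sqrt (2 / (3 * Ccoef gamma gamma gamma gamma)))) :
  let xi : seqR := fun m => if Nat.eqb m gamma then K else 0 in
  (forall eta : seqR, l2s (s + 3) eta ->
      (forall m, dM xi eta m = 0) -> forall m, eta m = 0)
  <->
  ((forall m : nat, (2 * gamma + 1 <= m)%nat ->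
      (omega m) ^ 2 * Ccoef gamma gamma gamma gamma
      - 2 * (omega gamma) ^ 2 * Ccoef gamma gamma m m <> 0)
   /\ (forall n : nat, (n < gamma)%nat -> Dgn gamma n <> 0)).
Proof.
  intros xi. set (g := gamma) in *. set (C0 := Ccoef g g g g) in *.
  assert (HC0 : 0 < C0) by apply C_pos.
  assert (HK2 : 3 * K ^ 2 / 8 = omega g ^ 2 / C0).
  { assert (Hsq : sqrt (2 / (3 * C0)) ^ 2 = 2 / (3 * C0)).
    { simpl. rewrite Rmult_1_r. apply sqrt_sqrt. apply Rlt_le, Rdiv_lt_0_compat; lra. }
    assert (K ^ 2 = 4 * omega g ^ 2 * (2 / (3 * C0))).
    { rewrite <- Hsq. destruct hK as [-> | ->]; ring. }
    rewrite H. field. lra. }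
  assert (Hom := omega_pos g).
  set (d := fun m => omega m ^ 2 * C0 - 2 * omega g ^ 2 * Ccoef g g m m).
  set (E := fun (eta : seqR) m => d m * eta m - omega g ^ 2 *
       (if Nat.leb m (2 * g) then Ccoef (2 * g - m) g g m * eta (2 * g - m)%nat else 0)).
  assert (HE : forall eta, l2s (s + 3) eta -> forall m, dM xi eta m = E eta m / C0).
  { intros eta Hl m. change (dM (xiK g K) eta m = E eta m / C0).
    rewrite (dM_formula g K s eta m hs Hl). rewrite HK2. unfold E, d. rewrite C_gm. field. lra. }
  assert (HE0 : forall eta, l2s (s + 3) eta -> forall m, dM xi eta m = 0 <-> E eta m = 0).
  { intros eta Hl m. rewrite HE by auto. split; intros H.
    - apply (Rmult_eq_reg_r (/ C0)). rewrite Rmult_0_l. exact H. apply Rinv_neq_0_compat. lra.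
    - rewrite H. unfold Rdiv. ring. }
  split.
  - intros Hker. split.
    + intros m Hm Hd.
      set (eta := fun n => if Nat.eqb n m then 1 else 0).
      assert (Hl : l2s (s + 3) eta).
      { apply (l2s_fin _ _ m m). intros n Hn _. unfold eta. apply Nat.eqb_neq in Hn. rewrite Hn. reflexivity. }
      assert (H1 : eta m = 0).
      { apply (Hker eta Hl). intros m'. apply HE0; auto. unfold E, eta.
        destruct (Nat.eqb_spec m' m).
        - subst m'. destruct (Nat.leb_spec m (2 * g)); [lia|]. unfold d. rewrite Rmult_1_r, Rmult_0_r, Rminus_0_r. exact Hd.
        - destruct (Nat.leb_spec m' (2 * g)).
          + destruct (Nat.eqb_spec (2 * g - m') m); [lia|]. ring.
          + ring. }
      unfold eta in H1. rewrite Nat.eqb_refl in H1. lra.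
    + intros n Hn HD.
      set (n' := (2 * g - n)%nat).
      set (c := omega g ^ 2 * Ccoef g n' g n).
      assert (HD' : d n * d n' - c * c = 0).
      { unfold Dgn in HD. unfold d, c, n'. fold C0 in HD. rewrite <- HD. ring. }
      assert (Hnn : n <> n') by (unfold n'; lia).
      assert (Hsupp : forall (eta : seqR), (forall k, k <> n -> k <> n' -> eta k = 0) ->
                forall m, m <> n -> m <> n' -> E eta m = 0).
      { intros eta Hs0 m H1 H2. unfold E. rewrite (Hs0 m H1 H2).
        destruct (Nat.leb_spec m (2 * g)).
        - rewrite (Hs0 (2 * g - m)%nat); [ring| |]; unfold n'; lia.
        - ring. }
      assert (Hrow_n : forall (eta : seqR), E eta n = d n * eta n - c * eta n').
      { intros eta. unfold E. destruct (Nat.leb_spec n (2 * g)); [|lia]. unfold c, n'. rewrite C_cross1. ring. }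
      assert (Hrow_n' : forall (eta : seqR), E eta n' = d n' * eta n' - c * eta n).
      { intros eta. unfold E. destruct (Nat.leb_spec n' (2 * g)); [|unfold n' in *; lia].
        replace (2 * g - n')%nat with n by (unfold n'; lia). unfold c, n'. rewrite C_cross2. ring. }
      destruct (Req_dec (d n) 0) as [Hdn|Hdn]; [destruct (Req_dec c 0) as [Hc|Hc]|].
      * set (eta := fun k => if Nat.eqb k n then 1 else 0).
        assert (Hs0 : forall k, k <> n -> k <> n' -> eta k = 0).
        { intros k Hk _. unfold eta. apply Nat.eqb_neq in Hk. rewrite Hk. reflexivity. }
        assert (Hl : l2s (s + 3) eta) by (apply (l2s_fin _ _ n n'); auto).
        assert (H1 : eta n = 0).
        { apply (Hker eta Hl). intros m'. apply HE0; auto.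
          destruct (Nat.eq_dec m' n) as [->|H1]; [|destruct (Nat.eq_dec m' n') as [->|H2]].
          - rewrite Hrow_n, Hdn, Hc. ring.
          - rewrite Hrow_n', Hc. unfold eta. destruct (Nat.eqb_spec n' n); [lia|]. ring.
          - apply Hsupp; auto. }
        unfold eta in H1. rewrite Nat.eqb_refl in H1. lra.
      * set (eta := fun k => if Nat.eqb k n then c else if Nat.eqb k n' then d n else 0).
        assert (Hs0 : forall k, k <> n -> k <> n' -> eta k = 0).
        { intros k Hk Hk'. unfold eta. apply Nat.eqb_neq in Hk. apply Nat.eqb_neq in Hk'. rewrite Hk, Hk'. reflexivity. }
        assert (Hen : eta n = c) by (unfold eta; rewrite Nat.eqb_refl; reflexivity).
        assert (Hen' : eta n' = d n).
        { unfold eta. destruct (Nat.eqb_spec n' n); [lia|]. rewrite Nat.eqb_refl. reflexivity. }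
        assert (Hl : l2s (s + 3) eta) by (apply (l2s_fin _ _ n n'); auto).
        assert (H1 : eta n = 0).
        { apply (Hker eta Hl). intros m'. apply HE0; auto.
          destruct (Nat.eq_dec m' n) as [->|H1]; [|destruct (Nat.eq_dec m' n') as [->|H2]].
          - rewrite Hrow_n, Hen, Hen'. ring.
          - rewrite Hrow_n', Hen, Hen'. rewrite <- HD'. ring.
          - apply Hsupp; auto. }
        lra.
      * set (eta := fun k => if Nat.eqb k n then c else if Nat.eqb k n' then d n else 0).
        assert (Hs0 : forall k, k <> n -> k <> n' -> eta k = 0).
        { intros k Hk Hk'. unfold eta. apply Nat.eqb_neq in Hk. apply Nat.eqb_neq in Hk'. rewrite Hk, Hk'. reflexivity. }
        assert (Hen : eta n = c) by (unfold eta; rewrite Nat.eqb_refl; reflexivity).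
        assert (Hen' : eta n' = d n).
        { unfold eta. destruct (Nat.eqb_spec n' n); [lia|]. rewrite Nat.eqb_refl. reflexivity. }
        assert (Hl : l2s (s + 3) eta) by (apply (l2s_fin _ _ n n'); auto).
        assert (H1 : eta n' = 0).
        { apply (Hker eta Hl). intros m'. apply HE0; auto.
          destruct (Nat.eq_dec m' n) as [->|H1]; [|destruct (Nat.eq_dec m' n') as [->|H2]].
          - rewrite Hrow_n, Hen, Hen'. ring.
          - rewrite Hrow_n', Hen, Hen'. rewrite <- HD'. ring.
          - apply Hsupp; auto. }
        lra.
  - intros [Hc1 Hc2] eta Hl Hdm.
    assert (HEz : forall m, E eta m = 0) by (intros m; apply HE0; auto).
    assert (Hpair : forall n, (n < g)%nat -> eta n = 0 /\ eta (2 * g - n)%nat = 0).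
    { intros n Hn. set (n' := (2 * g - n)%nat).
      set (c := omega g ^ 2 * Ccoef g n' g n).
      assert (HD : d n * d n' - c * c <> 0).
      { intros HD'. apply (Hc2 n Hn). unfold Dgn. unfold d, c, n' in HD'. fold C0. rewrite <- HD'. ring. }
      assert (E1 : d n * eta n - c * eta n' = 0).
      { rewrite <- (HEz n). unfold E. destruct (Nat.leb_spec n (2 * g)); [|lia]. unfold c, n'. rewrite C_cross1. ring. }
      assert (E2 : d n' * eta n' - c * eta n = 0).
      { rewrite <- (HEz n'). unfold E. destruct (Nat.leb_spec n' (2 * g)); [|unfold n' in *; lia].
        replace (2 * g - n')%nat with n by (unfold n'; lia). unfold c, n'. rewrite C_cross2. ring. }
      split.
      - apply (Rmult_eq_reg_l (d n * d n' - c * c)); auto.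
        replace ((d n * d n' - c * c) * eta n) with (d n' * (d n * eta n - c * eta n') + c * (d n' * eta n' - c * eta n)) by ring.
        rewrite E1, E2. ring.
      - apply (Rmult_eq_reg_l (d n * d n' - c * c)); auto.
        replace ((d n * d n' - c * c) * eta n') with (c * (d n * eta n - c * eta n') + d n * (d n' * eta n' - c * eta n)) by ring.
        rewrite E1, E2. ring. }
    intros m.
    destruct (Nat.lt_ge_cases (2 * g) m) as [Hm|Hm].
    + specialize (HEz m). unfold E in HEz. destruct (Nat.leb_spec m (2 * g)); [lia|].
      assert (d m <> 0) by (apply Hc1; lia).
      apply (Rmult_eq_reg_l (d m)); auto. rewrite Rmult_0_r. rewrite <- HEz. ring.
    + destruct (Nat.lt_total m g) as [Hlt|[Heq|Hgt]].
      * apply Hpair; auto.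
      * subst m. specialize (HEz g). unfold E, d in HEz. destruct (Nat.leb_spec g (2 * g)); [|lia].
        replace (2 * g - g)%nat with g in HEz by lia. fold C0 in HEz.
        assert (omega g ^ 2 * C0 <> 0) by (apply Rmult_integral_contrapositive; split; [apply pow_nonzero|]; lra).
        apply (Rmult_eq_reg_l (-2 * (omega g ^ 2 * C0))). rewrite Rmult_0_r. rewrite <- HEz. ring. intro Hx; apply H0; lra.
      * destruct (Hpair (2 * g - m)%nat) as [_ H2]; [lia|].
        replace (2 * g - (2 * g - m))%nat with m in H2 by lia. exact H2.
Qed.
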